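(* Let $d$ be odd and $N = p^4$ for some prime $p \neq 2$. In the coefficient-choosing game of degree $d$ over $\mathbb{Z}/N\mathbb{Z}$, Wanda has a winning strategy (whether she moves first or second).
   Context: The coefficient-choosing game of degree $d$ over $R = \mathbb{Z}/N\mathbb{Z}$: Nora and Wanda alternately choose coefficients of $f(x) = a_d x^d + \cdots + a_0$; on each move the current player picks a not-yet-chosen coefficient and assigns it a value in $R$, subject to $a_d \neq 0$, $a_0 \neq 0$. After all $d+1$ coefficients are chosen, Wanda wins if $f$ has a root in $R$, and Nora wins otherwise. *)

(* Defs.v *)
From HB Require Import structures.
From mathcomp Require Import all_boot all_order all_algebra.
Set Implicit Arguments. Unset Strict Implicit. Unset Printing Implicit Defensive.
Import GRing.Theory.
Local Open Scope ring_scope.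

(* A position is a partial assignment of the d+1 coefficients a_0..a_d
   (index i : 'I_d.+1 is the coefficient of x^i); None = not yet chosen. *)
Section Game.
Variables (N d : nat).

Definition position := {ffun 'I_d.+1 -> option 'Z_N}.

Definition empty_pos : position := [ffun _ => None].

Definition all_chosen (s : position) : bool := [forall i, s i != None].

Definition legal (i : 'I_d.+1) (v : 'Z_N) : bool :=
  ((i == ord_max) ==> (v != 0)) && ((i == ord0) ==> (v != 0)).

Definition update (s : position) (i : 'I_d.+1) (v : 'Z_N) : position :=
  [ffun j => if j == i then Some v else s j].

Definition pos_poly (s : position) : {poly 'Z_N} :=
  \poly_(i < d.+1) odflt 0 (s (inord i)).

Definition wanda_wins_final (s : position) : Prop :=
  exists x : 'Z_N, root (pos_poly s) x.

(* WandaWins s b : Wanda has a winning strategy from position s,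
   where b = true means it is Wanda's turn to move, b = false Nora's.
   (Least fixed point: the game is finite.) *)
Inductive WandaWins : position -> bool -> Prop :=
| WW_end s b : all_chosen s -> wanda_wins_final s -> WandaWins s b
| WW_wanda s : ~~ all_chosen s ->
    (exists i v, s i = None /\ legal i v /\ WandaWins (update s i v) false) ->
    WandaWins s true
| WW_nora s : ~~ all_chosen s ->
    (forall i v, s i = None -> legal i v -> WandaWins (update s i v) true) ->
    WandaWins s false.

End Game.

(* Main.v *)
Require Import Defs.
From mathcomp Require Import all_boot all_order all_algebra.
From mathcomp Require Import ring zify.
Set Implicit Arguments. Unset Strict Implicit. Unset Printing Implicit Defensive.
Import GRing.Theory.
Local Open Scope ring_scope.

Section Gen.
Variables (N d : nat).
Implicit Types (s : position N d).

Definition nones s := [set j | s j == None].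

Lemma update_other s i v j : j != i -> update s i v j = s j.
Proof. by move=> h; rewrite /update ffunE (negbTE h). Qed.

Lemma update_same s i v : update s i v i = Some v.
Proof. by rewrite /update ffunE eqxx. Qed.

Lemma nones_dec s i v : s i = None -> (#|nones (update s i v)| < #|nones s|)%N.
Proof.
move=> si; apply: proper_card; apply/properP; split.
  apply/subsetP => j; rewrite !inE /update ffunE; case: (j == i) => //.
exists i; first by rewrite inE si.
by rewrite inE update_same.
Qed.

Lemma two_inv (PW PN : position N d -> Prop) :
 (forall s, PN s -> all_chosen s -> wanda_wins_final s) ->
 (forall s, PW s -> all_chosen s -> wanda_wins_final s) ->
 (forall s, PN s -> forall i v, s i = None -> legal i v -> PW (update s i v)) ->
 (forall s, PW s -> ~~ all_chosen s -> exists i v, s i = None /\ legal i v /\ PN (update s i v)) ->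
 forall s, (PN s -> WandaWins s false) /\ (PW s -> WandaWins s true).
Proof.
move=> hN hW tN tW s.
move: {2}#|nones s| (leqnn #|nones s|) => n; elim: n s => [|n IH] s hs.
  have ac : all_chosen s.
    apply/forallP => i; apply/negP => /eqP si.
    have hi : i \in nones s by rewrite inE si.
    have : (0 < #|nones s|)%N by apply/card_gt0P; exists i.
    by rewrite leqn0 in hs; rewrite (eqP hs).
  by split=> h; apply: WW_end => //; [apply: hN | apply: hW].
split=> h.
  have [ac|nac] := boolP (all_chosen s); first by apply: WW_end => //; apply: hN.
  apply: WW_nora => // i v si lv.
  apply: (proj2 (IH _ _)); last by apply: tN.
  by rewrite -ltnS; apply: leq_trans (nones_dec v si) hs.
have [ac|nac] := boolP (all_chosen s); first by apply: WW_end => //; apply: hW.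
apply: WW_wanda => //.
have [i [v [si [lv hp]]]] := tW s h nac.
exists i, v; split => //; split => //.
apply: (proj1 (IH _ _)); last by [].
by rewrite -ltnS; apply: leq_trans (nones_dec v si) hs.
Qed.

End Gen.
Section Sig.
Variable d : nat.
Hypothesis dodd : odd d.

Definition sig (n : nat) : nat :=
  if n == 0%N then d else if n == d then 0%N else if odd n then n.+1 else n.-1.

Lemma sig_props n : (n <= d)%N -> [/\ (sig n <= d)%N, sig (sig n) = n & sig n != n].
Proof.
move=> nd; have d0 : (0 < d)%N by case: d dodd.
rewrite /sig.
have [n0|n0] := eqVneq n 0%N.
  rewrite n0 eqxx.
  have -> : (d == 0%N) = false by lia.
  split => //; lia.
have [nd'|nd'] := eqVneq n d.
  have dn : (d == 0%N) = false by lia.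
  rewrite nd' ?dn ?eqxx; split => //; lia.
case on: (odd n).
  have h1 : n.+1 != d.
    by apply/eqP => h; move: dodd; rewrite -h /= on.
  rewrite /= on (negbTE h1) /=; split => //; lia.
have n2 : (2 <= n)%N.
  by case: n n0 on nd nd' => [|[|n]].
have : n.-1 != 0%N by lia.
move/negbTE => ->.
have : n.-1 != d by lia.
move/negbTE => ->.
have -> : odd n.-1.
  by case: n n2 on {n0 nd nd'} => [|n] //= _; move/negbT; rewrite negbK.
split; lia.
Qed.
End Sig.

Section Pairing.
Variables (N d : nat).
Hypothesis dodd : odd d.
Hypothesis two_unit : (2%:R : 'Z_N) \is a GRing.unit.
Local Open Scope ring_scope.
Implicit Types (s : position N d).

Definition sg (i : 'I_d.+1) : 'I_d.+1 := inord (sig d i).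

Lemma sgK i : sg (sg i) = i.
Proof.
have [h1 h2 h3] := sig_props dodd (ltn_ord i : (i <= d)%N).
by apply: val_inj; rewrite /sg /= !inordK ?h2 // ltnS.
Qed.

Lemma sg_neq i : sg i != i.
Proof.
have [h1 h2 h3] := sig_props dodd (ltn_ord i : (i <= d)%N).
by apply/eqP => /(congr1 val); rewrite /= inordK ?ltnS //; apply/eqP.
Qed.

Lemma neq_sg i : i != sg i.
Proof. by rewrite eq_sym sg_neq. Qed.

Lemma sg_inj : injective sg.
Proof. by move=> x y h; rewrite -(sgK x) h sgK. Qed.

Lemma sg0 : sg ord0 = ord_max.
Proof. by apply: val_inj; rewrite /= /sig /= inordK. Qed.

Lemma sgmax : sg ord_max = ord0.
Proof. by rewrite -sg0 sgK. Qed.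

Lemma legal_sg j (a : 'Z_N) : legal j a -> legal (sg j) (- a).
Proof.
rewrite /legal oppr_eq0 => /andP[/implyP h1 /implyP h2].
have [e|hm] := eqVneq j ord_max.
  by rewrite e sgmax h1 ?e ?eqxx ?implybT.
have [e|h0] := eqVneq j ord0.
  by rewrite e sg0 h2 ?e ?eqxx ?implybT.
have -> : (sg j == ord_max) = false by apply/negbTE; apply: contra h0 => /eqP e'; rewrite -(sgK j) e' sgmax.
have -> : (sg j == ord0) = false by apply/negbTE; apply: contra hm => /eqP e'; rewrite -(sgK j) e' sg0.
by [].
Qed.

Definition PN s := forall i, s (sg i) = omap (fun a => - a) (s i).
Definition PW s := exists j a, [/\ s j = Some a, s (sg j) = None, legal j a &
   forall i, i != j -> i != sg j -> s (sg i) = omap (fun a => - a) (s i)].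

Lemma eval_pos s x : (pos_poly s).[x] = \sum_(i < d.+1) odflt 0 (s i) * x ^+ i.
Proof. by rewrite horner_poly; apply: eq_bigr => i _; rewrite inord_val. Qed.

Lemma PN_final s : PN s -> wanda_wins_final s.
Proof.
move=> h; exists 1; rewrite /root eval_pos.
set S := \sum_(i < d.+1) _.
have eS : S = \sum_(i < d.+1) odflt 0 (s i).
  by apply: eq_bigr => i _; rewrite expr1n mulr1.
have eN : S = - S.
  rewrite {1}eS (reindex_inj sg_inj) /= eS -sumrN; apply: eq_bigr => i _.
  by rewrite h; case: (s i) => //=; rewrite oppr0.
have : 2%:R * S = 0 by rewrite mulr_natl mulr2n {1}eN addNr.
by move=> e; apply/eqP; rewrite -(mulKr two_unit S) e mulr0.
Qed.

Lemma pairing_wins : WandaWins (empty_pos N d) false.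
Proof.
apply: (proj1 (@two_inv N d PW PN _ _ _ _ _)).
- by move=> s hs _; apply: PN_final.
- move=> s [j [a [_ sj _ _]]] /forallP /(_ (sg j)); by rewrite sj.
- move=> s hs i v si lv; exists i, v; split.
  + by rewrite update_same.
  + by rewrite update_other ?sg_neq // hs si.
  + by [].
  + move=> k ki kj; rewrite (update_other _ _ ki) update_other ?hs //.
    by apply: contra kj => /eqP <-; rewrite sgK.
- move=> s [j [a [sj sgj lj hi]]] _; exists (sg j), (- a); split; [by [] | split; [by apply: legal_sg|]].
  + move=> i.
    have [->|ij] := eqVneq i j.
      by rewrite update_same update_other ?sj //; apply: neq_sg.
    have [->|isj] := eqVneq i (sg j).
      by rewrite sgK update_same update_other ?sj /= ?opprK //; apply: neq_sg.
    rewrite !update_other ?hi //.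
    by apply: contra ij => /eqP /sg_inj ->.
- by move=> i; rewrite /empty_pos !ffunE.
Qed.

End Pairing.

Section Gen2.
Variables (N d : nat).
Local Open Scope ring_scope.
Implicit Types (s : position N d).

Definition cf s (k : nat) : 'Z_N := odflt 0 (s (inord k)).

Lemma closed_inv (P : position N d -> Prop) :
  (forall s, P s -> all_chosen s -> wanda_wins_final s) ->
  (forall s, P s -> forall i v, s i = None -> P (update s i v)) ->
  forall s b, P s -> WandaWins s b.
Proof.
move=> hf hu s b hs.
have tW : forall s, P s -> ~~ all_chosen s -> exists i v, s i = None /\ legal i v /\ P (update s i v).
  move=> s' h' /forallPn [i /negPn /eqP si]; exists i, 1; split => //; split.
    by rewrite /legal oner_neq0 !implybT.
  by apply: hu.
have [h1 h2] := @two_inv N d P P hf hf (fun s h i v si _ => hu s h i v si) tW s.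
by case: b; [apply: h2|apply: h1].
Qed.

Lemma keep s k a i v : s (inord k) = Some a -> s i = None -> update s i v (inord k) = Some a.
Proof.
move=> h1 h2; rewrite update_other //; apply/eqP => e; move: h2; by rewrite -e h1.
Qed.

Lemma eval4 s x : (3 <= d)%N -> x ^+ 4 = 0 ->
  (pos_poly s).[x] = cf s 0 + cf s 1 * x + cf s 2 * x ^+ 2 + cf s 3 * x ^+ 3.
Proof.
move=> d3 x4; rewrite horner_poly -(big_mkord xpredT (fun i => cf s i * x ^+ i)).
rewrite (big_cat_nat _ (n := 4)) //=.

rewrite [X in _ + X]big1_seq ?addr0; last first.
  move=> i /andP[_]; rewrite mem_index_iota => /andP[h _].
  by rewrite -(subnKC h) exprD x4 mul0r mulr0.
by rewrite /index_iota /= !big_cons big_nil expr0 expr1 mulr1 addr0 !addrA.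
Qed.

Lemma eval1 s x : d = 1%N -> (pos_poly s).[x] = cf s 0 + cf s 1 * x.
Proof.
move=> d1; rewrite horner_poly -(big_mkord xpredT (fun i => cf s i * x ^+ i)).
by rewrite d1 /index_iota /= !big_cons big_nil expr0 expr1 mulr1 addr0.
Qed.

End Gen2.

Section Main.
Variables (p d : nat).
Hypotheses (pp : prime p) (p2 : p != 2) (dodd : odd d).
Local Open Scope ring_scope.

Notation Z := ('Z_(p ^ 4)).
Notation pos := (position (p ^ 4) d).

Lemma N_gt1 : (1 < p ^ 4)%N.
Proof. have := prime_gt1 pp; rewrite !expnS expn0 muln1; nia. Qed.

Let P : Z := p%:R.

Lemma P4 : P ^+ 4 = 0.
Proof. by rewrite /P -natrX pchar_Zp // N_gt1. Qed.

Lemma natZ (v : Z) : v = (v : nat)%:R.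
Proof. by rewrite natr_Zp. Qed.

Lemma two_unitZ : (2%:R : Z) \is a GRing.unit.
Proof.
rewrite unitZpE ?N_gt1 //; apply: coprimeXl.
by rewrite prime_coprime // dvdn_prime2.
Qed.

Definition a0 : Z := (p ^ 2)%:R.

Lemma a0E : a0 = P ^+ 2.
Proof. by rewrite /a0 natrX. Qed.

Lemma a0_neq0 : a0 != 0.
Proof.
apply/eqP => /(congr1 val); rewrite /a0 /= val_Zp_nat ?N_gt1 // modn_small.
  have := prime_gt1 pp; rewrite !expnS expn0 muln1 => h /eqP; nia.
have := prime_gt1 pp; rewrite !expnS expn0 muln1 => h; nia.
Qed.

Lemma inord_neq k l : (k <= d)%N -> (l <= d)%N -> k != l ->
  (inord k : 'I_d.+1) != inord l.
Proof. by move=> hk hl; apply: contra => /eqP /(congr1 val); rewrite /= !inordK // => ->. Qed.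

Lemma legal_mid k (v : Z) : (0 < k)%N -> (k < d)%N -> legal (inord k : 'I_d.+1) v.
Proof.
move=> h1 h2; apply/andP; split; apply/implyP => /eqP /(congr1 val); rewrite /= inordK; lia.
Qed.

Lemma root_gen (s : pos) x : (3 <= d)%N -> x ^+ 4 = 0 ->
  cf s 0 + cf s 1 * x + cf s 2 * x ^+ 2 + cf s 3 * x ^+ 3 = 0 -> wanda_wins_final s.
Proof. by move=> d3 x4 h; exists x; rewrite /root (eval4 _ d3 x4) h. Qed.

Lemma cfE (s : pos) k a : s (inord k) = Some a -> cf s k = a.
Proof. by rewrite /cf => ->. Qed.

Section D3.
Hypothesis d3 : (3 <= d)%N.

Lemma rootA (s : pos) (v : Z) : v \is a GRing.unit ->
  s (inord 0) = Some a0 -> s (inord 1) = Some v -> s (inord 2) = Some 0 ->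
  wanda_wins_final s.
Proof.
move=> vu h0 h1 h2; set u := v^-1.
apply: (root_gen (x := - (P ^+ 2 * u))) => //.
  have -> : (- (P ^+ 2 * u)) ^+ 4 = P ^+ 4 * (P ^+ 4 * u ^+ 4) by ring.
  by rewrite P4 mul0r.
rewrite (cfE h0) (cfE h1) (cfE h2) a0E.
set c3 := cf s 3.
have -> : P ^+ 2 + v * - (P ^+ 2 * u) + 0 * (- (P ^+ 2 * u)) ^+ 2 + c3 * (- (P ^+ 2 * u)) ^+ 3
   = P ^+ 2 * (1 - v * u) + P ^+ 4 * (- c3 * P ^+ 2 * u ^+ 3) by ring.
by rewrite /u mulrV // subrr mulr0 P4 mul0r addr0.
Qed.

Lemma rootB (s : pos) (c : Z) : c \is a GRing.unit ->
  s (inord 0) = Some a0 -> s (inord 1) = Some (P * c) -> s (inord 2) = Some 0 ->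
  wanda_wins_final s.
Proof.
move=> cu h0 h1 h2; set u := c^-1; set c3 := cf s 3.
apply: (root_gen (x := - (P * u) + P ^+ 2 * c3 * u ^+ 4)) => //.
  have -> : (- (P * u) + P ^+ 2 * c3 * u ^+ 4) ^+ 4 = P ^+ 4 * (- u + P * c3 * u ^+ 4) ^+ 4 by ring.
  by rewrite P4 mul0r.
rewrite (cfE h0) (cfE h1) (cfE h2) a0E -/c3.
set x := (- (P * u) + P ^+ 2 * c3 * u ^+ 4).
have -> : P ^+ 2 + P * c * x + 0 * x ^+ 2 + c3 * x ^+ 3 =
   (1 - c * u) * (P ^+ 2 * (1 - P * c3 * u ^+ 3)) +
   P ^+ 4 * (c3 * (3%:R * c3 * u ^+ 6 - 3%:R * P * c3 ^+ 2 * u ^+ 9 + P ^+ 2 * c3 ^+ 3 * u ^+ 12)).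
  by rewrite /x; ring.
by rewrite /u mulrV // subrr mul0r P4 mul0r addr0.
Qed.

Lemma rootC (s : pos) (e : Z) :
  s (inord 0) = Some a0 -> s (inord 1) = Some (P ^+ 2 * e) -> s (inord 2) = Some (-1) ->
  wanda_wins_final s.
Proof.
move=> h0 h1 h2; set h := (2%:R : Z)^-1; set c3 := cf s 3.
set s0 := (e + c3) * h.
apply: (root_gen (x := P + P ^+ 2 * s0)) => //.
  have -> : (P + P ^+ 2 * s0) ^+ 4 = P ^+ 4 * (1 + P * s0) ^+ 4 by ring.
  by rewrite P4 mul0r.
rewrite (cfE h0) (cfE h1) (cfE h2) a0E -/c3.
have -> : P ^+ 2 + P ^+ 2 * e * (P + P ^+ 2 * s0) + -1 * (P + P ^+ 2 * s0) ^+ 2 +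
    c3 * (P + P ^+ 2 * s0) ^+ 3 =
   P ^+ 3 * (e + c3) * (1 - 2%:R * h) +
   P ^+ 4 * (e * s0 - s0 ^+ 2 + c3 * (3%:R * s0 + 3%:R * P * s0 ^+ 2 + P ^+ 2 * s0 ^+ 3)).
  by rewrite /s0; ring.
by rewrite /h mulrV ?two_unitZ // subrr mulr0 P4 mul0r addr0.
Qed.


Lemma rootD (s : pos) :
  s (inord 0) = Some a0 -> s (inord 1) = Some 1 -> wanda_wins_final s.
Proof.
move=> h0 h1; apply: (root_gen (x := - P ^+ 2)) => //.
  have -> : (- P ^+ 2) ^+ 4 = P ^+ 4 * P ^+ 4 by ring.
  by rewrite P4 mul0r.
rewrite (cfE h0) (cfE h1) a0E.
have -> : P ^+ 2 + 1 * - P ^+ 2 + cf s 2 * (- P ^+ 2) ^+ 2 + cf s 3 * (- P ^+ 2) ^+ 3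
  = P ^+ 4 * (cf s 2 - cf s 3 * P ^+ 2) by ring.
by rewrite P4 mul0r.
Qed.

Lemma after_a1 (s2 : pos) (v w : Z) :
  s2 (inord 0) = Some a0 -> s2 (inord 1) = Some v -> s2 (inord 2) = None ->
  (forall s : pos, s (inord 0) = Some a0 -> s (inord 1) = Some v ->
     s (inord 2) = Some w -> wanda_wins_final s) ->
  WandaWins s2 true.
Proof.
move=> h0 h1 h2 hr.
apply: WW_wanda; first by apply/forallPn; exists (inord 2); rewrite h2.
exists (inord 2), w; split => //; split; first by apply: legal_mid => //.
apply: (@closed_inv _ _ (fun s : pos => [/\ s (inord 0) = Some a0, s (inord 1) = Some v &
     s (inord 2) = Some w])).
- by move=> s [] ? ? ? _; apply: hr.
- by move=> s [] ? ? ? i x si; split; apply: keep.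
- split; [apply: keep| apply: keep| apply: update_same] => //.
Qed.

Lemma wanda_first3 : WandaWins (empty_pos (p ^ 4) d) true.
Proof.
have n01 : (inord 0 : 'I_d.+1) != inord 1 by apply: inord_neq => //; lia.
have n02 : (inord 0 : 'I_d.+1) != inord 2 by apply: inord_neq => //; lia.
have n12 : (inord 1 : 'I_d.+1) != inord 2 by apply: inord_neq => //; lia.
apply: WW_wanda; first by apply/forallPn; exists ord0; rewrite ffunE.
exists (inord 0), a0; split; first by rewrite ffunE.
split; first by rewrite /legal a0_neq0 !implybT.
set s1 := update _ _ _.
have s10 : s1 (inord 0) = Some a0 by rewrite update_same.
have s11 : s1 (inord 1) = None by rewrite update_other 1?eq_sym // ffunE.
have s12 : s1 (inord 2) = None by rewrite update_other 1?eq_sym // ffunE.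
apply: WW_nora; first by apply/forallPn; exists (inord 1); rewrite s11.
move=> i v si lv.
have [ei|ni] := eqVneq i (inord 1).
  subst i.
  have t0 : update s1 (inord 1) v (inord 0) = Some a0 by apply: keep.
  have t1 : update s1 (inord 1) v (inord 1) = Some v by apply: update_same.
  have t2 : update s1 (inord 1) v (inord 2) = None by rewrite update_other 1?eq_sym.
  have vE := natZ v.
  have [pv|pv] := boolP (p %| v)%N; last first.
    apply: (after_a1 (w := 0) t0 t1 t2) => s h0 h1 h2; apply: (rootA _ h0 h1 h2).
    by rewrite vE unitZpE ?N_gt1 //; apply: coprimeXl; rewrite prime_coprime.
  have [pc|pc] := boolP (p %| v %/ p)%N.
    have ve : v = P ^+ 2 * (v %/ p %/ p)%:R.
      have e : (v : nat) = (v %/ p %/ p * p * p)%N by rewrite divnK // divnK.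
      by apply: (etrans vE); rewrite [in LHS]e !natrM /P; ring.
    have {}t1 : update s1 (inord 1) v (inord 1) = Some (P ^+ 2 * (v %/ p %/ p)%:R) by rewrite t1 -ve.
    by apply: (after_a1 (w := -1) t0 t1 t2) => s h0 h1 h2; apply: (rootC h0 h1 h2).
  have ve : v = P * (v %/ p)%:R.
    have e : (v : nat) = (v %/ p * p)%N by rewrite divnK.
    by apply: (etrans vE); rewrite [in LHS]e !natrM /P mulrC.
  have {}t1 : update s1 (inord 1) v (inord 1) = Some (P * (v %/ p)%:R) by rewrite t1 -ve.
  apply: (after_a1 (w := 0) t0 t1 t2) => s h0 h1 h2; apply: (rootB _ h0 h1 h2).
  by rewrite unitZpE ?N_gt1 //; apply: coprimeXl; rewrite prime_coprime.
have hi1 : update s1 i v (inord 1) = None by rewrite update_other // eq_sym.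
have hi0 : update s1 i v (inord 0) = Some a0 by apply: keep.
apply: WW_wanda; first by apply/forallPn; exists (inord 1); rewrite hi1.
exists (inord 1), 1; split => //; split; first by rewrite /legal oner_neq0 !implybT.
apply: (@closed_inv _ _ (fun s : pos => s (inord 0) = Some a0 /\ s (inord 1) = Some 1)).
- by move=> s [] ? ? _; apply: rootD.
- by move=> s [] ? ? j x sj; split; apply: keep.
- split; [apply: keep| apply: update_same] => //.
Qed.

End D3.

Lemma wanda_first1 : d = 1%N -> WandaWins (empty_pos (p ^ 4) d) true.
Proof.
move=> d1.
apply: WW_wanda; first by apply/forallPn; exists ord0; rewrite ffunE.
exists (inord 1), 1; split; first by rewrite ffunE.
split; first by rewrite /legal oner_neq0 !implybT.
apply: (@closed_inv _ _ (fun s : pos => s (inord 1) = Some 1)).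
- move=> s h _; exists (- cf s 0); rewrite /root (eval1 _ _ d1) (cfE h).
  by rewrite mul1r subrr.
- by move=> s h j x sj; apply: keep.
- exact: update_same.
Qed.

End Main.

Theorem lemma8 (p d : nat) :
  prime p -> p != 2 -> odd d ->
  WandaWins (empty_pos (p ^ 4) d) true /\ WandaWins (empty_pos (p ^ 4) d) false.
Proof.
move=> pp p2 dodd; split.
  have [d1|d3] : d = 1%N \/ (3 <= d)%N.
    by case: d dodd => [|[|[|d']]] //= _; [left | right].
    exact: wanda_first1.
  exact: wanda_first3.
apply: pairing_wins => //. exact: (@two_unitZ p d pp p2 dodd).
Qed.
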